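(* Let $(M,\circ,\mathrm{OR})$ be a free $\mathbb{D}$-module of rank 3 with scalar product and orientation, and let $z_1,z_2,z_3\in M\setminus\epsilon M$ be pairwise $\mathbb{D}$-linearly independent (equivalently, no two of their axes are parallel). Then the following are equivalent: (i) $z_1\times z_2\circ z_3=0$; (ii) some $z_i$ is a $\mathbb{D}$-linear combination of the other two; (iii) the three axes intersect orthogonally a common line of $E$. If these hold, then every $z_i$ is a $\mathbb{D}$-linear combination of the other two.
   Context: $\mathbb{D}=\{a+\epsilon b: a,b\in\mathbb{R}\}$, $\epsilon^2=0$. Scalar product: symmetric $\mathbb{D}$-bilinear $\circ:M\times M\to\mathbb{D}$ with $\mathfrak{Re}(x\circ x)\ge0$, equality iff $x\in\epsilon M$; orientation: one of the two classes of ordered bases under $\{b'_j=A_{jk}b_k\}\sim\{b_k\}$ iff $\det\mathfrak{Re}(A)>0$. Cross product $x\times y=x^iy^j\epsilon_{ijk}m_k$ in any positive orthonormal basis $\{m_i\}$; $z_1\times z_2\circ z_3:=(z_1\times z_2)\circ z_3$. $V=M/\epsilon M$, $\pi$ the quotient map. $E$ is the set of real 3-dimensional subspaces $P\subset M$ with $\mathfrak{Du}(x\circ y)=0$ for $x,y\in P$ and $P\cap\epsilon M=\{0\}$, a Euclidean affine space over $V$ (with $B-A:=d^ke_k$ where $e^B_i=e^A_i+\epsilon\,\epsilon_{ijk}d^ke^A_j$, $\{e_i\}$ positive orthonormal in $V$, $e^P_i\in P$ its lift). Each $z\in M\setminus\epsilon M$ is uniquely $z=(a+\epsilon b)u$ with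 $a>0$, $b\in\mathbb{R}$, $u\circ u=1$; its axis is the line $\{P\in E: u\in P\}$, with direction $\pi(u)$. *)

(* Defs.v *)
From HB Require Import structures.
From mathcomp Require Import all_boot all_order all_algebra.
From mathcomp Require Import ring.
From mathcomp Require Import reals.
Set Implicit Arguments.
Unset Strict Implicit.
Unset Printing Implicit Defensive.
Import Order.TTheory GRing.Theory Num.Theory.
Local Open Scope ring_scope.

(* Dual numbers  D = { a + eps b },  eps^2 = 0, as pairs (a, b).        *)
Definition dual (R : Type) : Type := (R * R)%type.

Section DualRing.
Variable R : comNzRingType.

HB.instance Definition _ := Choice.copy (dual R) (R * R)%type.
HB.instance Definition _ := GRing.Zmodule.copy (dual R) (R * R)%type.

Definition dual_one : dual R := (1, 0).
Definition dual_mul (x y : dual R) : dual R :=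
  (x.1 * y.1, x.1 * y.2 + x.2 * y.1).

Lemma dual_mulA : associative dual_mul.
Proof. by case=> a b [c d] [e f]; rewrite /dual_mul /=; congr pair; ring. Qed.
Lemma dual_mulC : commutative dual_mul.
Proof. by case=> a b [c d]; rewrite /dual_mul /=; congr pair; ring. Qed.
Lemma dual_mul1 : left_id dual_one dual_mul.
Proof. by case=> a b; rewrite /dual_mul /dual_one /=; congr pair; ring. Qed.
Lemma dual_mulDl : left_distributive dual_mul +%R.
Proof. by case=> a b [c d] [e f]; rewrite /dual_mul /=; congr pair; rewrite /= ?mulrDl ?mulrDr; ring. Qed.
Lemma dual_one_neq0 : dual_one != 0.
Proof. by apply/eqP => -[] /eqP; rewrite oner_eq0. Qed.

HB.instance Definition _ := GRing.Zmodule_isComNzRing.Build (dual R)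
  dual_mulA dual_mulC dual_mul1 dual_mulDl dual_one_neq0.

Definition Re (x : dual R) : R := x.1.
Definition Du (x : dual R) : R := x.2.
Definition eps : dual R := (0, 1).
Definition dualr (a : R) : dual R := (a, 0).

End DualRing.

(* Setting: M a D-module, sp a scalar product, m a positive            *)
(* orthonormal3 basis (the orientation OR is the class of m).            *)
Section Setting.
Variable R : realType.
Local Notation D := (dual R).
Variable M : lmodType D.

Definition rscale (r : R) (x : M) : M := dualr r *: x.

Definition in_epsM (x : M) : Prop := exists y : M, x = eps R *: y.

Definition D_free (b : 'I_3 -> M) : Prop :=
  forall c : 'I_3 -> D, \sum_i c i *: b i = 0 -> forall i, c i = 0.
Definition D_spanning (b : 'I_3 -> M) : Prop :=
  forall x : M, exists c : 'I_3 -> D, x = \sum_i c i *: b i.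
Definition D_basis (b : 'I_3 -> M) : Prop := D_free b /\ D_spanning b.

Definition scalar_product (sp : M -> M -> D) : Prop :=
  [/\ forall x y, sp x y = sp y x,
      forall (a : D) x y z, sp (a *: x + y) z = a * sp x z + sp y z,
      forall x, 0 <= Re (sp x x)
    & forall x, Re (sp x x) = 0 <-> in_epsM x].

Definition orthonormal3 (sp : M -> M -> D) (m : 'I_3 -> M) : Prop :=
  forall i j, sp (m i) (m j) = (i == j)%:R.

(* Levi-Civita symbol on indices 0,1,2 *)
Definition levi (i j k : 'I_3) : R :=
  ((j%:R - i%:R) * (k%:R - j%:R) * (k%:R - i%:R)) / 2%:R.

(* cross product in the positive orthonormal3 basis m; the coordinates
   of x in the orthonormal3 basis m are x^i = x o m_i *)
Definition cross (sp : M -> M -> D) (m : 'I_3 -> M) (x y : M) : M :=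
  \sum_i \sum_j \sum_k (sp x (m i) * sp y (m j) * dualr (levi i j k)) *: m k.

Definition real_span3 (p : 'I_3 -> M) (x : M) : Prop :=
  exists r : 'I_3 -> R, x = \sum_i rscale (r i) (p i).
Definition real_free3 (p : 'I_3 -> M) : Prop :=
  forall r : 'I_3 -> R, \sum_i rscale (r i) (p i) = 0 -> forall i, r i = 0.
Definition real_subspace3 (P : M -> Prop) : Prop :=
  exists p : 'I_3 -> M, real_free3 p /\ forall x, P x <-> real_span3 p x.

Definition in_E (sp : M -> M -> D) (P : M -> Prop) : Prop :=
  [/\ real_subspace3 P,
      forall x y, P x -> P y -> Du (sp x y) = 0
    & forall x, P x -> in_epsM x -> x = 0].

(* x is the lift e^P_i to P of the basis vector e_i = pi(m_i) of V *)
Definition is_lift (m : 'I_3 -> M) (P : M -> Prop) (i : 'I_3) (x : M) : Prop :=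
  P x /\ in_epsM (x - m i).

(* Q = P + d, where d = d^k e_k in V (coordinates w.r.t. e_k = pi(m_k)):
   e^Q_i = e^P_i + eps eps_ijk d^k e^P_j *)
Definition translate (m : 'I_3 -> M) (P : M -> Prop) (d : 'I_3 -> R)
    (Q : M -> Prop) : Prop :=
  forall eP eQ : 'I_3 -> M,
    (forall i, is_lift m P i (eP i)) -> (forall i, is_lift m Q i (eQ i)) ->
    forall i, eQ i = eP i + eps R *: \sum_j \sum_k rscale (levi i j k * d k) (eP j).

Definition on_line (m : 'I_3 -> M) (A : M -> Prop) (v : 'I_3 -> R)
    (Q : M -> Prop) : Prop :=
  exists t : R, translate m A (fun k => t * v k) Q.

Definition axis_unit (sp : M -> M -> D) (z u : M) : Prop :=
  sp u u = 1 /\ exists a b : R, 0 < a /\ z = ((a, b) : D) *: u.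

(* the axis of z meets the line (A, v) of E orthogonally: it has a point
   on the line, and its direction pi(u) is orthogonal in V to v^k e_k,
   the inner product on V being <pi x, pi y> = Re (x o y) *)
Definition axis_meets_orth (sp : M -> M -> D) (m : 'I_3 -> M) (z : M)
    (A : M -> Prop) (v : 'I_3 -> R) : Prop :=
  exists u : M, axis_unit sp z u /\
   (exists P : M -> Prop, in_E sp P /\ P u /\ on_line m A v P) /\
   Re (sp u (\sum_k rscale (v k) (m k))) = 0.

Definition D_comb (x y z : M) : Prop :=
  exists a b : D, x = a *: y + b *: z.

Definition D_indep2 (x y : M) : Prop :=
  forall a b : D, a *: x + b *: y = 0 -> a = 0 /\ b = 0.

End Setting.

(* Main.v *)
Require Import Defs.
From HB Require Import structures.
From mathcomp Require Import all_boot all_order all_algebra.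
From mathcomp Require Import reals ring lra.
Set Implicit Arguments. Unset Strict Implicit. Unset Printing Implicit Defensive.
Import Order.TTheory GRing.Theory Num.Theory.
Local Open Scope ring_scope.

Section Basics.
Variable R : realType.
Local Notation D := (dual R).
Lemma dmulE (a b : D) : a * b = (a.1*b.1, a.1*b.2 + a.2*b.1). Proof. by []. Qed.
Lemma daddE (a b : D) : a + b = (a.1+b.1, a.2+b.2). Proof. by []. Qed.
Lemma doppE (a : D) : - a = (- a.1, - a.2). Proof. by []. Qed.
Lemma d0E : (0 : D) = (0, 0). Proof. by []. Qed.
Lemma d1E : (1 : D) = (1, 0). Proof. by []. Qed.

Definition o0 : 'I_3 := @Ordinal 3 0 isT.
Definition o1 : 'I_3 := @Ordinal 3 1 isT.
Definition o2 : 'I_3 := @Ordinal 3 2 isT.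
Lemma sum3 (V : nmodType) (F : 'I_3 -> V) : \sum_(i < 3) F i = F o0 + F o1 + F o2.
Proof.
rewrite !big_ord_recr big_ord0 /= add0r.
have -> : widen_ord (leqnSn 2) (widen_ord (leqnSn 1) ord_max) = o0 by apply: val_inj.
have -> : widen_ord (leqnSn 2) ord_max = o1 by apply: val_inj.
by have -> : (ord_max : 'I_3) = o2 by apply: val_inj.
Qed.
Lemma ord3P (i : 'I_3) : i = o0 \/ i = o1 \/ i = o2.
Proof.
case: i => [[|[|[|n]]] Hn]; [left|right;left|right;right|by []]; exact: val_inj.
Qed.

Definition v3 := (R * R * R)%type.
Definition vdot (u w : v3) : R := u.1.1 * w.1.1 + u.1.2 * w.1.2 + u.2 * w.2.
Definition vcross (u w : v3) : v3 :=
  (u.1.2 * w.2 - u.2 * w.1.2, u.2 * w.1.1 - u.1.1 * w.2, u.1.1 * w.1.2 - u.1.2 * w.1.1).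
Definition vadd (u w : v3) : v3 := (u.1.1 + w.1.1, u.1.2 + w.1.2, u.2 + w.2).
Definition vscale (a : R) (u : v3) : v3 := (a * u.1.1, a * u.1.2, a * u.2).
Definition vzero : v3 := (0, 0, 0).
Definition vdet u w x := vdot (vcross u w) x.
Definition vget (u : v3) (i : 'I_3) : R := if val i == 0%N then u.1.1 else if val i == 1%N then u.1.2 else u.2.
End Basics.



Section Vec.
Variable R : realType.
Local Notation v3 := (v3 R).
Local Notation vzero := (vzero R).

Lemma v3eq (u w : v3) : u = w <-> [/\ u.1.1 = w.1.1, u.1.2 = w.1.2 & u.2 = w.2].
Proof.
split; first by move=> ->.
by case: u => [[? ?] ?]; case: w => [[? ?] ?] /= [-> -> ->].
Qed.

Lemma vdot_self_eq0 (u : v3) : vdot u u = 0 -> u = vzero.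
Proof.
case: u => [[x y] z]; rewrite /vdot /= => H.
have hx : x * x = 0 by nra.
have hy : y * y = 0 by nra.
have hz : z * z = 0 by nra.
move: hx hy hz; rewrite -!expr2 => /eqP; rewrite sqrf_eq0 => /eqP ->.
move=> /eqP; rewrite sqrf_eq0 => /eqP ->.
by move=> /eqP; rewrite sqrf_eq0 => /eqP ->.
Qed.

Lemma vdot_self_ge0 (u : v3) : 0 <= vdot u u.
Proof. case: u => [[x y] z]; rewrite /vdot /=; nra. Qed.

Lemma vdot_self_gt0 (u : v3) : u <> vzero -> 0 < vdot u u.
Proof.
move=> Hu; rewrite lt_neqAle vdot_self_ge0 andbT eq_sym; apply/eqP => H.
exact: Hu (vdot_self_eq0 H).
Qed.

Lemma cramer_id (p1 p2 p3 : v3) :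
  let n := vcross p1 p2 in
  vscale (vdot n n) p3 = vadd (vscale (vdot p3 n) n)
    (vadd (vscale (vdot (vcross p3 p2) n) p1) (vscale (vdot (vcross p1 p3) n) p2)).
Proof.
rewrite /=; apply/v3eq; rewrite /vscale /vadd /vdot /vcross /=; split; ring.
Qed.

Lemma solve1 (p1 p2 p3 : v3) : vcross p1 p2 <> vzero -> vdet p1 p2 p3 = 0 ->
  exists a b : R, p3 = vadd (vscale a p1) (vscale b p2).
Proof.
move=> Hn Hd.
have HN := vdot_self_gt0 Hn.
have HN0 : vdot (vcross p1 p2) (vcross p1 p2) != 0 by rewrite gt_eqF.
exists (vdot (vcross p3 p2) (vcross p1 p2) / vdot (vcross p1 p2) (vcross p1 p2)).
exists (vdot (vcross p1 p3) (vcross p1 p2) / vdot (vcross p1 p2) (vcross p1 p2)).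
have E := cramer_id p1 p2 p3; rewrite /= in E.
have Hd' : vdot p3 (vcross p1 p2) = 0 by rewrite -Hd /vdet /vdot; ring.
rewrite Hd' in E.
move/v3eq: E; rewrite /vscale /vadd /= => -[E1 E2 E3].
apply/v3eq; rewrite /vscale /vadd /=; split.
set N := vdot (vcross p1 p2) (vcross p1 p2) in HN0 E1 E2 E3 *.
- by rewrite -[p3.1.1](mulKf HN0) E1; field.
- by rewrite -[p3.1.2](mulKf HN0) E2; field.
- by rewrite -[p3.2](mulKf HN0) E3; field.
Qed.

Lemma solve2 (p1 p2 p3 q1 q2 q3 : v3) : vcross p1 p2 <> vzero -> vdet p1 p2 p3 = 0 ->
  vdet q1 p2 p3 + vdet p1 q2 p3 + vdet p1 p2 q3 = 0 ->
  exists a b c d : R, p3 = vadd (vscale a p1) (vscale b p2) /\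
    q3 = vadd (vadd (vscale a q1) (vscale c p1)) (vadd (vscale b q2) (vscale d p2)).
Proof.
move=> Hn Hd Hdu.
have [a [b E]] := solve1 Hn Hd.
rewrite E in Hdu.
set w := vadd q3 (vadd (vscale (-a) q1) (vscale (-b) q2)).
have Hw : vdet p1 p2 w = 0 by rewrite -Hdu /w /vdet /vdot /vcross /vadd /vscale /=; ring.
have [c [d Ew]] := solve1 Hn Hw.
exists a, b, c, d; split=> //.
move/v3eq: Ew; rewrite /w /vadd /vscale /= => -[E1 E2 E3].
apply/v3eq; rewrite /vadd /vscale /=; split; lra.
Qed.

Lemma meet_lemma (p v m' : v3) : p <> vzero -> v <> vzero -> vdot p v = 0 ->
  vdot m' p = 0 -> vdot m' v = 0 -> exists t : R, m' = vscale t (vcross v p).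
Proof.
move=> Hp Hv Hpv Hmp Hmv.
set w := vcross v p.
have Hww : vdot w w = vdot v v * vdot p p.
  have -> : vdot w w = vdot v v * vdot p p - vdot p v ^+ 2
    by rewrite /w /vdot /vcross /=; ring.
  by rewrite Hpv expr0n /= subr0.
have HN0 : vdot w w != 0.
  by rewrite Hww mulf_neq0 // gt_eqF // vdot_self_gt0.
have E : vscale (vdot w w) m' = vadd (vscale (vdot w m') w)
   (vcross w (vadd (vscale (vdot m' p) v) (vscale (- vdot m' v) p))).
  by apply/v3eq; rewrite /w /vscale /vadd /vdot /vcross /=; split; ring.
rewrite Hmp Hmv oppr0 in E.
exists (vdot w m' / vdot w w).
move/v3eq: E; rewrite /vscale /vadd /vcross /= => -[E1 E2 E3].
set N := vdot w w in HN0 E1 E2 E3 *.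
apply/v3eq; rewrite /vscale /=; split.
- by rewrite -[m'.1.1](mulKf HN0) E1; rewrite -/w; field.
- by rewrite -[m'.1.2](mulKf HN0) E2; rewrite -/w; field.
- by rewrite -[m'.2](mulKf HN0) E3; rewrite -/w; field.
Qed.

Definition mu (p q : v3) : v3 := vadd q (vscale (- (vdot q p / vdot p p)) p).

Lemma meet_cond (a v p q : v3) : p <> vzero -> v <> vzero -> vdot p v = 0 ->
  vdot q v = vdot a (vcross p v) ->
  exists t : R, mu p q = vcross (vadd a (vscale t v)) p.
Proof.
move=> Hp Hv Hpv Hq.
have Hpp : vdot p p != 0 by rewrite gt_eqF // vdot_self_gt0.
set m' := vadd (mu p q) (vscale (-1) (vcross a p)).
have H1 : vdot m' p = 0.
  rewrite /m' /mu; set N := vdot p p in Hpp *.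
  have -> : vdot (vadd (vadd q (vscale (- (vdot q p / N)) p)) (vscale (-1) (vcross a p))) p
     = vdot q p - vdot q p / N * N by rewrite /N /vdot /vadd /vscale /vcross /=; ring.
  by rewrite divfK // subrr.
have H2 : vdot m' v = 0.
  have -> : vdot m' v = vdot q v - (vdot q p / vdot p p) * vdot p v - vdot a (vcross p v)
    by rewrite /m' /mu /vdot /vadd /vscale /vcross /=; ring.
  by rewrite Hpv Hq mulr0 subr0 subrr.
have [t Ht] := meet_lemma Hp Hv Hpv H1 H2.
exists t.
move/v3eq: Ht; rewrite /m' /vadd /vscale /vcross /= => -[E1 E2 E3].
apply/v3eq; rewrite /vadd /vscale /vcross /=; split; lra.
Qed.

Lemma vdot_cross_self1 (p w : v3) : vdot p (vcross p w) = 0.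
Proof. rewrite /vdot /vcross /=; ring. Qed.

Lemma construct (p1 p2 p3 q1 q2 q3 : v3) (a0 a1 b0 b1 : R) :
  p1 <> vzero -> p2 <> vzero -> p3 <> vzero -> vcross p1 p2 <> vzero ->
  p3 = vadd (vscale a0 p1) (vscale b0 p2) ->
  q3 = vadd (vadd (vscale a0 q1) (vscale a1 p1)) (vadd (vscale b0 q2) (vscale b1 p2)) ->
  exists a : v3,
    (exists t, mu p1 q1 = vcross (vadd a (vscale t (vcross p1 p2))) p1) /\
    (exists t, mu p2 q2 = vcross (vadd a (vscale t (vcross p1 p2))) p2) /\
    (exists t, mu p3 q3 = vcross (vadd a (vscale t (vcross p1 p2))) p3).
Proof.
move=> Hp1 Hp2 Hp3 Hv E3 F3.
set v := vcross p1 p2.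
have Hvv : vdot v v != 0 by rewrite gt_eqF // vdot_self_gt0.
set g1 := vcross p1 v; set g2 := vcross p2 v.
set s1 := vdot q1 v; set s2 := vdot q2 v.
set a := vscale (1 / (vdot v v ^+ 2)) (vadd (vscale s1 (vcross g2 v)) (vscale s2 (vcross v g1))).
have I1 : vdot (vcross g2 v) g1 = vdot v v ^+ 2 by rewrite /g1 /g2 /v /vdot /vcross /=; ring.
have I2 : vdot (vcross v g1) g1 = 0 by rewrite /g1 /v /vdot /vcross /=; ring.
have I3 : vdot (vcross g2 v) g2 = 0 by rewrite /g2 /v /vdot /vcross /=; ring.
have I4 : vdot (vcross v g1) g2 = vdot v v ^+ 2 by rewrite /g1 /g2 /v /vdot /vcross /=; ring.
have Hv2 : vdot v v ^+ 2 != 0 by rewrite expf_neq0.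
have A1 : vdot a g1 = s1.
  have -> : vdot a g1 = 1 / (vdot v v ^+ 2) * (s1 * vdot (vcross g2 v) g1 + s2 * vdot (vcross v g1) g1)
    by rewrite /a /vdot /vadd /vscale /=; ring.
  by rewrite I1 I2 mulr0 addr0; field.
have A2 : vdot a g2 = s2.
  have -> : vdot a g2 = 1 / (vdot v v ^+ 2) * (s1 * vdot (vcross g2 v) g2 + s2 * vdot (vcross v g1) g2)
    by rewrite /a /vdot /vadd /vscale /=; ring.
  by rewrite I3 I4 mulr0 add0r; field.
have P1 : vdot p1 v = 0 by rewrite /v /vdot /vcross /=; ring.
have P2 : vdot p2 v = 0 by rewrite /v /vdot /vcross /=; ring.
have P3 : vdot p3 v = 0.
  rewrite E3; have -> : vdot (vadd (vscale a0 p1) (vscale b0 p2)) v = a0 * vdot p1 v + b0 * vdot p2 v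
    by rewrite /vdot /vadd /vscale /=; ring.
  by rewrite P1 P2 !mulr0 addr0.
exists a; split; [|split].
- by apply: meet_cond => //; rewrite A1.
- by apply: meet_cond => //; rewrite A2.
- apply: meet_cond => //.
  have -> : vdot q3 v = a0 * s1 + b0 * s2 + a1 * vdot p1 v + b1 * vdot p2 v
    by rewrite F3 /s1 /s2 /vdot /vadd /vscale /=; ring.
  have -> : vdot a (vcross p3 v) = a0 * vdot a g1 + b0 * vdot a g2
    by rewrite E3 /g1 /g2 /vdot /vadd /vscale /vcross /=; ring.
  by rewrite A1 A2 P1 P2 !mulr0 !addr0.
Qed.

Lemma iii_core (a v r1 r2 r3 : v3) (t1 t2 t3 a1 a2 a3 b1 b2 b3 : R) :
  v <> vzero -> vdot r1 v = 0 -> vdot r2 v = 0 -> vdot r3 v = 0 ->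
  let p1 := vscale a1 r1 in let p2 := vscale a2 r2 in let p3 := vscale a3 r3 in
  let q1 := vadd (vscale a1 (vcross (vadd a (vscale t1 v)) r1)) (vscale b1 r1) in
  let q2 := vadd (vscale a2 (vcross (vadd a (vscale t2 v)) r2)) (vscale b2 r2) in
  let q3 := vadd (vscale a3 (vcross (vadd a (vscale t3 v)) r3)) (vscale b3 r3) in
  vdet p1 p2 p3 = 0 /\ vdet q1 p2 p3 + vdet p1 q2 p3 + vdet p1 p2 q3 = 0.
Proof.
move=> Hv H1 H2 H3 p1 p2 p3 q1 q2 q3.
have Hvv : vdot v v != 0 by rewrite gt_eqF // vdot_self_gt0.
have Hdet : vdet r1 r2 r3 = 0.
  have E : vdet r1 r2 r3 * vdot v v = vdot r1 v * vdot (vcross r2 r3) v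
     + vdot r2 v * vdot (vcross r3 r1) v + vdot r3 v * vdot (vcross r1 r2) v
    by rewrite /vdet /vdot /vcross /=; ring.
  rewrite H1 H2 H3 !mul0r !addr0 in E.
  by move/eqP: E; rewrite mulf_eq0 (negbTE Hvv) orbF => /eqP.
split.
  have -> : vdet p1 p2 p3 = a1 * a2 * a3 * vdet r1 r2 r3
    by rewrite /p1 /p2 /p3 /vdet /vdot /vcross /vscale /=; ring.
  by rewrite Hdet mulr0.
have -> : vdet q1 p2 p3 + vdet p1 q2 p3 + vdet p1 p2 q3 =
  a1 * a2 * a3 * (t1 * (vdot r2 v * vdot r1 r3 - vdot r3 v * vdot r1 r2)
                + t2 * (vdot r3 v * vdot r2 r1 - vdot r1 v * vdot r2 r3)
                + t3 * (vdot r1 v * vdot r3 r2 - vdot r2 v * vdot r3 r1))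
  + (b1 * a2 * a3 + a1 * b2 * a3 + a1 * a2 * b3) * vdet r1 r2 r3.
  by rewrite /q1 /q2 /q3 /p1 /p2 /p3 /vdet /vdot /vcross /vscale /vadd /=; ring.
by rewrite H1 H2 H3 Hdet; ring.
Qed.
End Vec.


Section Coord.
Variable R : realType.
Local Notation D := (dual R).
Variable M : lmodType D.
Variable sp : M -> M -> D.
Variable m : 'I_3 -> M.
Hypothesis Hsp : scalar_product sp.
Hypothesis Hm : D_basis m.
Hypothesis Hon : orthonormal3 sp m.

Lemma sp_sym x y : sp x y = sp y x. Proof. by case: Hsp. Qed.
Lemma sp_lin a x y z : sp (a *: x + y) z = a * sp x z + sp y z. Proof. by case: Hsp. Qed.
Lemma sp0 z : sp 0 z = 0.
Proof.
have := sp_lin 1 0 0 z; rewrite scaler0 addr0 mul1r => H.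
by apply: (@addrI _ (sp 0 z)); rewrite addr0 -H.
Qed.
Lemma spD x y z : sp (x + y) z = sp x z + sp y z.
Proof. by rewrite -[x]scale1r sp_lin mul1r scale1r. Qed.
Lemma spZ a x z : sp (a *: x) z = a * sp x z.
Proof. by rewrite -[a *: x]addr0 sp_lin sp0 addr0. Qed.
Lemma sp_sum n (F : 'I_n -> M) z : sp (\sum_(i < n) F i) z = \sum_(i < n) sp (F i) z.
Proof.
elim: n F => [|n IH] F; first by rewrite !big_ord0 sp0.
by rewrite !big_ord_recr /= spD IH.
Qed.

Definition cv (x : M) (i : 'I_3) : D := sp x (m i).

Lemma sum_delta (F : 'I_3 -> D) j : \sum_(i < 3) F i * (i == j)%:R = F j.
Proof.
rewrite sum3; case: (ord3P j) => [->|[->|->]] /=; rewrite ?mulr1 ?mulr0 ?addr0 ?add0r //.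
Qed.

Lemma cv_sum (c : 'I_3 -> D) j : cv (\sum_i c i *: m i) j = c j.
Proof.
rewrite /cv sp_sum; under eq_bigr do rewrite spZ Hon.
exact: sum_delta.
Qed.

Lemma decomp x : x = \sum_i cv x i *: m i.
Proof.
case: Hm => _ /(_ x) [c Hc].
have E : forall j, cv x j = c j by move=> j; rewrite Hc cv_sum.
by rewrite {1}Hc; apply: eq_bigr => i _; rewrite E.
Qed.

Lemma cv0 i : cv 0 i = 0. Proof. exact: sp0. Qed.
Lemma cv_lin a x y i : cv (a *: x + y) i = a * cv x i + cv y i.
Proof. by rewrite /cv sp_lin. Qed.

Lemma sp_coord x y : sp x y = \sum_i cv x i * cv y i.
Proof.
rewrite {1}(decomp x) sp_sum; apply: eq_bigr => i _.
by rewrite spZ sp_sym.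
Qed.

Definition Pv (x : M) : v3 R := ((cv x o0).1, (cv x o1).1, (cv x o2).1).
Definition Qv (x : M) : v3 R := ((cv x o0).2, (cv x o1).2, (cv x o2).2).
Definition mk (p q : v3 R) : M :=
  ((p.1.1, q.1.1) : D) *: m o0 + ((p.1.2, q.1.2) : D) *: m o1 + ((p.2, q.2) : D) *: m o2.

Lemma cv_mk p q : cv (mk p q) o0 = (p.1.1, q.1.1) /\ cv (mk p q) o1 = (p.1.2, q.1.2)
   /\ cv (mk p q) o2 = (p.2, q.2).
Proof.
have E : mk p q = \sum_i (fun i => if i == o0 then ((p.1.1, q.1.1) : D) else if i == o1 then ((p.1.2, q.1.2) : D) else ((p.2,q.2) : D)) i *: m i.
  by rewrite sum3.
by rewrite E !cv_sum.
Qed.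
Lemma Pv_mk p q : Pv (mk p q) = p.
Proof. by rewrite /Pv; have [-> [-> ->]] := cv_mk p q; case: p => [[]]. Qed.
Lemma Qv_mk p q : Qv (mk p q) = q.
Proof. by rewrite /Qv; have [-> [-> ->]] := cv_mk p q; case: q => [[]]. Qed.
Lemma mk_eta x : x = mk (Pv x) (Qv x).
Proof.
rewrite {1}(decomp x) sum3 /mk /Pv /Qv /=.
by case: (cv x o0) => ? ?; case: (cv x o1) => ? ?; case: (cv x o2) => ? ?.
Qed.
Lemma ext x y : Pv x = Pv y -> Qv x = Qv y -> x = y.
Proof. by move=> HP HQ; rewrite (mk_eta x) (mk_eta y) HP HQ. Qed.

Lemma Pv_lin a x y : Pv (a *: x + y) = vadd (vscale a.1 (Pv x)) (Pv y).
Proof. by rewrite /Pv !cv_lin. Qed.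
Lemma Qv_lin a x y : Qv (a *: x + y) = vadd (vadd (vscale a.1 (Qv x)) (vscale a.2 (Pv x))) (Qv y).
Proof. by rewrite /Qv /Pv !cv_lin /vadd /vscale /=. Qed.

Lemma spE x y : sp x y = (vdot (Pv x) (Pv y), vdot (Pv x) (Qv y) + vdot (Qv x) (Pv y)).
Proof.
rewrite sp_coord sum3 /vdot /Pv /Qv /= !dmulE !daddE /=.
congr pair; ring.
Qed.

Lemma epsE x : in_epsM x <-> Pv x = vzero R.
Proof.
split.
  case=> y ->; rewrite -[_ *: y]addr0 Pv_lin /vscale /vadd /Pv /eps /=.
  by rewrite /= !cv0 /= !mul0r !addr0.
move=> HP; exists (mk (Qv x) (vzero R)); apply: ext.
  by rewrite -[_ *: mk _ _]addr0 Pv_lin HP /vadd /vscale /eps /Pv /= !cv0 /= !mul0r !addr0.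
rewrite -[_ *: mk _ _]addr0 Qv_lin Qv_mk Pv_mk /vadd /vscale /eps /=.
by rewrite /Qv /= !cv0 /= !mul0r !mul1r !add0r !addr0; case: (Qv x) => [[]].
Qed.

Lemma cv_cross x y l :
  cv (cross sp m x y) l = \sum_i \sum_j (cv x i * cv y j * dualr (levi R i j l)).
Proof.
rewrite /cross {1}/cv sp_sum; apply: eq_bigr => i _.
rewrite sp_sum; apply: eq_bigr => j _.
rewrite sp_sum; under eq_bigr do rewrite spZ Hon.
exact: sum_delta.
Qed.

Lemma Pv_cross x y : Pv (cross sp m x y) = vcross (Pv x) (Pv y).
Proof.
rewrite /Pv !cv_cross !sum3 /levi /dualr /vcross /=.
by congr (_, _, _); field.
Qed.
Lemma Qv_cross x y : Qv (cross sp m x y) = vadd (vcross (Qv x) (Pv y)) (vcross (Pv x) (Qv y)).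
Proof.
rewrite /Qv /Pv !cv_cross !sum3 /levi /dualr /vcross /vadd /=.
by congr (_, _, _); field.
Qed.

Lemma Pv0 : Pv 0 = vzero R. Proof. by rewrite /Pv !cv0. Qed.
Lemma Qv0 : Qv 0 = vzero R. Proof. by rewrite /Qv !cv0. Qed.
Lemma PvD x y : Pv (x + y) = vadd (Pv x) (Pv y).
Proof. by rewrite /Pv /cv !spD. Qed.
Lemma PvZ a x : Pv (a *: x) = vscale a.1 (Pv x).
Proof. by rewrite /Pv /cv !spZ. Qed.
Lemma QvD x y : Qv (x + y) = vadd (Qv x) (Qv y).
Proof. by rewrite /Qv /cv !spD. Qed.
Lemma QvZ a x : Qv (a *: x) = vadd (vscale a.1 (Qv x)) (vscale a.2 (Pv x)).
Proof. by rewrite /Qv /Pv /cv !spZ. Qed.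

Lemma zero_of x : Pv x = vzero R -> Qv x = vzero R -> x = 0.
Proof. by move=> H1 H2; apply: ext; rewrite ?Pv0 ?Qv0. Qed.

Lemma tripleE x y z : sp (cross sp m x y) z =
  (vdet (Pv x) (Pv y) (Pv z),
   vdet (Qv x) (Pv y) (Pv z) + vdet (Pv x) (Qv y) (Pv z) + vdet (Pv x) (Pv y) (Qv z)).
Proof.
rewrite spE Pv_cross Qv_cross /vdet /vdot /vcross /vadd /=; congr pair; ring.
Qed.

Definition tz x y z := sp (cross sp m x y) z = 0.

Lemma tzE x y z : tz x y z <-> vdet (Pv x) (Pv y) (Pv z) = 0 /\
   vdet (Qv x) (Pv y) (Pv z) + vdet (Pv x) (Qv y) (Pv z) + vdet (Pv x) (Pv y) (Qv z) = 0.
Proof.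
rewrite /tz tripleE d0E; split; first by case.
by case=> -> ->.
Qed.

Lemma tz_swap x y z : tz x y z -> tz y x z.
Proof.
rewrite !tzE => -[H1 H2]; split.
  by rewrite -[RHS]oppr0 -H1 /vdet /vdot /vcross /=; ring.
by rewrite -[RHS]oppr0 -H2 /vdet /vdot /vcross /=; ring.
Qed.
Lemma tz_cyc x y z : tz x y z -> tz y z x.
Proof.
rewrite !tzE => -[H1 H2]; split.
  by rewrite -H1 /vdet /vdot /vcross /=; ring.
by rewrite -H2 /vdet /vdot /vcross /=; ring.
Qed.

Lemma PQ2 (a b : D) x y :
  Pv (a *: x + b *: y) = vadd (vscale a.1 (Pv x)) (vscale b.1 (Pv y)) /\
  Qv (a *: x + b *: y) = vadd (vadd (vscale a.1 (Qv x)) (vscale a.2 (Pv x)))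
                              (vadd (vscale b.1 (Qv y)) (vscale b.2 (Pv y))).
Proof. by rewrite PvD QvD !PvZ !QvZ. Qed.

Lemma comb_tz x y z : D_comb x y z -> tz x y z.
Proof.
case=> a [b ->]; have [E1 E2] := PQ2 a b y z.
rewrite tzE E1 E2 /vdet /vdot /vcross /vadd /vscale /=; split => /=; ring.
Qed.

Lemma indep_cross x y : D_indep2 x y -> vcross (Pv x) (Pv y) <> vzero R.
Proof.
move=> H Hc.
case: (eqVneq (vdot (Pv x) (Pv x)) 0) => Hpp.
  have Hp := vdot_self_eq0 Hpp.
  have := H (eps R) 0; rewrite scale0r addr0.
  case.
  - apply: zero_of; first by rewrite PvZ Hp /vscale /eps /= !mul0r.
    by rewrite QvZ Hp /vscale /vadd /eps /= !mul0r !mul1r !addr0.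
  - by move=> /(congr1 snd) /= /eqP; rewrite oner_eq0.
have := H (0, - vdot (Pv x) (Pv y)) (0, vdot (Pv x) (Pv x)).
case.
- have [E1 E2] := PQ2 (0, - vdot (Pv x) (Pv y)) (0, vdot (Pv x) (Pv x)) x y.
  apply: zero_of; first by rewrite E1 /vadd /vscale /= !mul0r !addr0.
  rewrite E2.
  have E3 := congr1 (fun w => vcross w (Pv x)) Hc.
  move/v3eq: E3; rewrite /vcross /vzero /= => -[F1 F2 F3].
  rewrite !mul0r subrr in F1 F2 F3.
  apply/v3eq; rewrite /vadd /vscale /vzero /vdot /=; split.
  + by rewrite -[RHS]F1; ring.
  + by rewrite -[RHS]F2; ring.
  + by rewrite -[RHS]F3; ring.
- by move=> _ /(congr1 snd) /= /eqP; rewrite (negbTE Hpp).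
Qed.

Lemma tz_comb x y z : D_indep2 x y -> tz x y z -> D_comb z x y.
Proof.
move=> Hi /tzE [H1 H2].
have [a [b [c [d [E1 E2]]]]] := solve2 (indep_cross Hi) H1 H2.
exists (a, c), (b, d).
have [F1 F2] := PQ2 (a, c) (b, d) x y.
by apply: ext; rewrite ?F1 ?F2.
Qed.

Definition ve (i : 'I_3) : v3 R := ((i == o0)%:R, (i == o1)%:R, (i == o2)%:R).
Definition tov (f : 'I_3 -> R) : v3 R := (f o0, f o1, f o2).
Definition Pc (c : v3 R) (x : M) : Prop := Qv x = vcross c (Pv x).

Lemma Pv_m i : Pv (m i) = ve i.
Proof. by rewrite /Pv /cv !Hon /ve; case: (i == o0); case: (i == o1); case: (i == o2). Qed.
Lemma Qv_m i : Qv (m i) = vzero R.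
Proof. by rewrite /Qv /cv !Hon /ve; case: (i == o0); case: (i == o1); case: (i == o2). Qed.

Lemma PvB x y : Pv (x - y) = vadd (Pv x) (vscale (-1) (Pv y)).
Proof. by rewrite -scaleN1r PvD PvZ. Qed.
Lemma QvB x y : Qv (x - y) = vadd (Qv x) (vscale (-1) (Qv y)).
Proof. by rewrite -scaleN1r QvD QvZ /vadd /vscale /=; apply/v3eq; split => /=; ring. Qed.

Lemma Pv_levi (e : 'I_3 -> M) (d : 'I_3 -> R) i : (forall j, Pv (e j) = ve j) ->
  Pv (\sum_j \sum_k rscale (levi R i j k * d k) (e j)) = vcross (tov d) (ve i).
Proof.
move=> He; rewrite !sum3 !PvD /rscale !PvZ !He.
case: (ord3P i) => [->|[->|->]];
  rewrite /levi /tov /ve /vcross /vadd /vscale /dualr /=; apply/v3eq; split => /=; field; by [].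
Qed.

Lemma Pc_inE c : in_E sp (Pc c).
Proof.
split.
- exists (fun i => mk (ve i) (vcross c (ve i))); split.
  + move=> r Hr.
    have := congr1 Pv Hr; rewrite Pv0 sum3 !PvD /rscale !PvZ !Pv_mk.
    move/v3eq; rewrite /ve /vadd /vscale /dualr /= => -[E1 E2 E3] i.
    by case: (ord3P i) => [->|[->|->]]; lra.
  + move=> x; split.
    * move=> Hx; exists (fun i => vget (Pv x) i).
      apply: ext.
        rewrite sum3 !PvD /rscale !PvZ !Pv_mk.
        by apply/v3eq; rewrite /ve /vadd /vscale /vget /dualr /=; split => /=; ring.
      rewrite sum3 !QvD /rscale !QvZ !Qv_mk !Pv_mk [Qv x]Hx.
      by apply/v3eq; rewrite /ve /vadd /vscale /vget /vcross /dualr /=; split => /=; ring.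
    * case=> r ->; rewrite /Pc.
      rewrite sum3 !QvD !PvD /rscale !QvZ !PvZ !Qv_mk !Pv_mk.
      by apply/v3eq; rewrite /ve /vadd /vscale /vcross /dualr /=; split => /=; ring.
- move=> x y Hx Hy; rewrite spE /Du Hx Hy /vdot /vcross /=; ring.
- move=> x Hx /epsE Hp; apply: zero_of => //.
  by rewrite [Qv x]Hx Hp /vcross /vzero /=; apply/v3eq; split => /=; ring.
Qed.

Lemma lift_Pv X i x : is_lift m X i x -> Pv x = ve i.
Proof.
case=> _ /epsE; rewrite PvB Pv_m; move/v3eq; rewrite /vadd /vscale /ve /vzero /= => -[E1 E2 E3].
apply/v3eq; split => /=; lra.
Qed.

Lemma Pc_lift c i x : is_lift m (Pc c) i x -> x = mk (ve i) (vcross c (ve i)).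
Proof.
move=> H; have HP := lift_Pv H; case: H => Hx _.
by rewrite (mk_eta x) [Qv x]Hx HP.
Qed.

Lemma translate_Pc a (d : 'I_3 -> R) : translate m (Pc a) d (Pc (vadd a (tov d))).
Proof.
move=> eP eQ HP HQ i.
have HPv : forall j, Pv (eP j) = ve j by move=> j; exact: lift_Pv (HP j).
rewrite (Pc_lift (HQ i)).
apply: ext.
  by rewrite Pv_mk PvD PvZ HPv /eps /vadd /vscale /ve /=; apply/v3eq; split => /=; ring.
rewrite Qv_mk QvD QvZ Pv_levi // (Pc_lift (HP i)) Qv_mk.
by apply/v3eq; rewrite /eps /vadd /vscale /vcross /tov /ve /=; split => /=; ring.
Qed.

Lemma Pv_V (v : 'I_3 -> R) : Pv (\sum_k rscale (v k) (m k)) = tov v.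
Proof.
rewrite sum3 !PvD /rscale !PvZ !Pv_m.
by apply/v3eq; rewrite /tov /ve /vadd /vscale /dualr /=; split => /=; ring.
Qed.

Lemma meets_Pc z a (v : 'I_3 -> R) t : Pv z <> vzero R -> vdot (Pv z) (tov v) = 0 ->
  mu (Pv z) (Qv z) = vcross (vadd a (vscale t (tov v))) (Pv z) ->
  axis_meets_orth sp m z (Pc a) v.
Proof.
move=> Hp Hpv Hmu.
set p := Pv z in Hp Hpv Hmu *; set q := Qv z in Hmu *.
have HN : 0 < vdot p p by exact: vdot_self_gt0.
set N := vdot p p in HN *.
set n := Num.sqrt N.
have Hn : 0 < n by rewrite sqrtr_gt0.
have Hn0 : n != 0 by rewrite gt_eqF.
have Hnn : n * n = N by rewrite -expr2 sqr_sqrtr // ltW.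
have Hpm : vdot p (mu p q) = 0.
  have -> : vdot p (mu p q) = vdot q p - vdot q p / N * N by rewrite /mu /N /vdot /vadd /vscale /=; ring.
  by rewrite divfK ?subrr // gt_eqF.
set u := mk (vscale (1/n) p) (vscale (1/n) (mu p q)).
exists u; split; [split|split].
- rewrite spE Pv_mk Qv_mk d1E; congr pair.
    have -> : vdot (vscale (1 / n) p) (vscale (1 / n) p) = (1/n) * (1/n) * N
      by rewrite /N /vdot /vscale /=; ring.
    by rewrite -Hnn; field.
  have -> : vdot (vscale (1 / n) p) (vscale (1 / n) (mu p q)) +
     vdot (vscale (1 / n) (mu p q)) (vscale (1 / n) p) = 2 * (1/n) * (1/n) * vdot p (mu p q)
    by rewrite /vdot /vscale /=; ring.
  by rewrite Hpm mulr0.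
- exists n, (vdot q p / n); split => //.
  apply: ext.
    rewrite PvZ Pv_mk /=.
    by apply/v3eq; rewrite /vscale /=; split => /=; field.
  rewrite QvZ Qv_mk Pv_mk /= /mu -/N -Hnn.
  by apply/v3eq; rewrite /vscale /vadd /=; split => /=; field.
- exists (Pc (vadd a (tov (fun k => t * v k)))); split; first exact: Pc_inE.
  split.
    rewrite /Pc Qv_mk Pv_mk Hmu.
    by apply/v3eq; rewrite /vscale /vadd /vcross /tov /=; split => /=; ring.
  by exists t; exact: translate_Pc.
- rewrite spE /Re /= Pv_V Pv_mk.
  have -> : vdot (vscale (1 / n) p) (tov v) = 1 / n * vdot p (tov v) by rewrite /vdot /vscale /=; ring.
  by rewrite Hpv mulr0.
Qed.

Lemma Re_sum n (F : 'I_n -> D) : (\sum_(i < n) F i).1 = \sum_(i < n) (F i).1.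
Proof.
elim: n F => [|n IH] F; first by rewrite !big_ord0.
by rewrite !big_ord_recr /= -IH.
Qed.

Lemma cv_rcomb (p : 'I_3 -> M) (r : 'I_3 -> R) j :
  (cv (\sum_l rscale (r l) (p l)) j).1 = \sum_l r l * (cv (p l) j).1.
Proof.
rewrite /cv sp_sum Re_sum; apply: eq_bigr => l _.
by rewrite /rscale spZ dmulE /dualr /=.
Qed.

Lemma Pv_comp x : Pv x = ((cv x o0).1, (cv x o1).1, (cv x o2).1). Proof. by []. Qed.

Lemma lift_exists X : in_E sp X -> forall i, exists x, is_lift m X i x.
Proof.
case=> [[p [Hfree Hspan]]] _ Heps i.
pose G : 'M[R]_3 := \matrix_(k, l) (cv (p k) l).1.
have key : forall (w : 'rV[R]_3) j,
    (cv (\sum_l rscale (w 0 l) (p l)) j).1 = (w *m G) 0 j.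
  by move=> w j; rewrite cv_rcomb mxE; apply: eq_bigr => l _; rewrite mxE.
have HG : G \in unitmx.
  rewrite -row_free_unit -kermx_eq0; apply/eqP/row_matrixP => k.
  rewrite row0; set w := row k (kermx G).
  have HwG : w *m G = 0 by rewrite /w -row_mul mulmx_ker row0.
  set y := \sum_l rscale (w 0 l) (p l).
  have Xy : X y by apply/Hspan; exists (fun l => w 0 l).
  have Hy : y = 0.
    apply: Heps => //; apply/epsE.
    by rewrite Pv_comp !key HwG !mxE.
  apply/rowP => l; rewrite [RHS]mxE.
  exact: Hfree (fun l => w 0 l) Hy l.
set w : 'rV[R]_3 := delta_mx 0 i *m invmx G.
exists (\sum_l rscale (w 0 l) (p l)); split.
  by apply/Hspan; exists (fun l => w 0 l).
apply/epsE; rewrite PvB Pv_m Pv_comp !key /w mulmxKV // !mxE /=.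
by apply/v3eq; rewrite /ve /vadd /vscale /=; split => /=;
  rewrite [in X in X + _]eq_sym; case: (_ == _); rewrite /= ?mulr1 ?mulr0 ?subrr ?addr0.
Qed.

Lemma span_closed (p : 'I_3 -> M) x y r :
  real_span3 p x -> real_span3 p y -> real_span3 p (x + rscale r y).
Proof.
case=> rx ->; case=> ry ->; exists (fun l => rx l + r * ry l).
apply: ext.
  rewrite /rscale !sum3 !PvD !PvZ !PvD !PvZ.
  by apply/v3eq; rewrite /vadd /vscale /dualr /=; split => /=; ring.
rewrite /rscale !sum3 !QvD !QvZ !QvD !QvZ !PvD !PvZ.
by apply/v3eq; rewrite /vadd /vscale /dualr /=; split => /=; ring.
Qed.

Lemma span0 (p : 'I_3 -> M) : real_span3 p 0.
Proof.
exists (fun _ => 0); apply: esym; apply: zero_of.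
  rewrite /rscale !sum3 !PvD !PvZ.
  by apply/v3eq; rewrite /vadd /vscale /dualr /=; split => /=; ring.
rewrite /rscale !sum3 !QvD !QvZ.
by apply/v3eq; rewrite /vadd /vscale /dualr /=; split => /=; ring.
Qed.

Lemma E_Qv X e0 e1 e2 : in_E sp X -> is_lift m X o0 e0 -> is_lift m X o1 e1 ->
  is_lift m X o2 e2 -> forall x, X x ->
  Qv x = vadd (vadd (vscale (Pv x).1.1 (Qv e0)) (vscale (Pv x).1.2 (Qv e1)))
              (vscale (Pv x).2 (Qv e2)).
Proof.
case=> [[p [Hfree Hspan]]] _ Heps L0 L1 L2 x Hx.
have P0 := lift_Pv L0; have P1 := lift_Pv L1; have P2 := lift_Pv L2.
case: L0 L1 L2 => [X0 _] [X1 _] [X2 _].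
set z := 0 + rscale (Pv x).1.1 e0 + rscale (Pv x).1.2 e1 + rscale (Pv x).2 e2.
have Xz : X z.
  apply/Hspan; apply: span_closed; last exact/Hspan.
  apply: span_closed; last exact/Hspan.
  apply: span_closed; last exact/Hspan.
  exact: span0.
have Xy : X (x + rscale (-1) z) by apply/Hspan; apply: span_closed; exact/Hspan.
have Hy : x + rscale (-1) z = 0.
  apply: Heps => //; apply/epsE.
  rewrite /z /rscale !PvD !PvZ !PvD !PvZ Pv0 P0 P1 P2.
  by apply/v3eq; rewrite /vadd /vscale /dualr /ve /vzero /=; split => /=; ring.
have := congr1 Qv Hy; rewrite Qv0 /z /rscale !QvD !QvZ !QvD !QvZ Qv0 P0 P1 P2.
move/v3eq; rewrite /vadd /vscale /dualr /ve /vzero /= => -[E1 E2 E3].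
apply/v3eq; rewrite /vadd /vscale /=; split => /=; lra.
Qed.

Lemma E_struct X : in_E sp X -> exists a, forall x, X x -> Qv x = vcross a (Pv x).
Proof.
move=> HE.
have [e0 L0] := lift_exists HE o0.
have [e1 L1] := lift_exists HE o1.
have [e2 L2] := lift_exists HE o2.
have HQ := E_Qv HE L0 L1 L2.
have S : forall x y, X x -> X y -> vdot (Pv x) (Qv y) + vdot (Qv x) (Pv y) = 0.
  by move=> x y Hx Hy; case: HE => _ Hdu _; have := Hdu x y Hx Hy; rewrite spE.
have P0 := lift_Pv L0; have P1 := lift_Pv L1; have P2 := lift_Pv L2.
case: L0 L1 L2 => [X0 _] [X1 _] [X2 _].
have S00 := S _ _ X0 X0; have S11 := S _ _ X1 X1; have S22 := S _ _ X2 X2.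
have S01 := S _ _ X0 X1; have S02 := S _ _ X0 X2; have S12 := S _ _ X1 X2.
rewrite ?P0 ?P1 ?P2 in S00 S11 S22 S01 S02 S12.
exists ((Qv e1).2, (Qv e2).1.1, (Qv e0).1.2) => x Hx.
rewrite (HQ x Hx).
move: S00 S11 S22 S01 S02 S12; move: (Qv e0) (Qv e1) (Qv e2) (Pv x) =>
  [[a0 a1] a2] [[b0 b1] b2] [[c0 c1] c2] [[x0 x1] x2].
rewrite /vdot /ve /= => S00 S11 S22 S01 S02 S12.
have -> : a0 = 0 by lra.
have -> : b1 = 0 by lra.
have -> : c2 = 0 by lra.
have -> : b0 = - a1 by lra.
have -> : c0 = - a2 by lra.
have -> : c1 = - b2 by lra.
by apply/v3eq; rewrite /vadd /vscale /vcross /=; split => /=; ring.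
Qed.

Lemma fun3_lift X e0 e1 e2 : is_lift m X o0 e0 -> is_lift m X o1 e1 -> is_lift m X o2 e2 ->
  forall i, is_lift m X i (if i == o0 then e0 else if i == o1 then e1 else e2).
Proof. by move=> L0 L1 L2 i; case: (ord3P i) => [->|[->|->]]. Qed.

Lemma meets_struct A a z (v : 'I_3 -> R) : in_E sp A ->
  (forall x, A x -> Qv x = vcross a (Pv x)) -> axis_meets_orth sp m z A v ->
  exists (r : v3 R) (t al be : R), Pv z = vscale al r /\
    Qv z = vadd (vscale al (vcross (vadd a (vscale t (tov v))) r)) (vscale be r) /\
    vdot r (tov v) = 0.
Proof.
move=> HA Ha [u [[_ [al [be [_ Hz]]]] [[P [HP [Pu [t Htr]]]] Horth]]].
have [b Hb] := E_struct HP.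
have [eA0 LA0] := lift_exists HA o0.
have [eA1 LA1] := lift_exists HA o1.
have [eA2 LA2] := lift_exists HA o2.
have [eP0 LP0] := lift_exists HP o0.
have [eP1 LP1] := lift_exists HP o1.
have [eP2 LP2] := lift_exists HP o2.
have HfA := fun3_lift LA0 LA1 LA2.
have HfP := fun3_lift LP0 LP1 LP2.
have T := Htr _ _ HfA HfP.
have key : forall i, vcross b (ve i) = vadd (vcross a (ve i)) (vcross (tov (fun k => t * v k)) (ve i)).
  move=> i; have := congr1 Qv (T i).
  rewrite QvD QvZ Pv_levi; last by move=> j; exact: lift_Pv (HfA j).
  have [XA _] := HfA i; have [XP _] := HfP i.
  rewrite (Hb _ XP) (Ha _ XA) (lift_Pv (HfA i)) (lift_Pv (HfP i)) => ->.
  by apply/v3eq; rewrite /vadd /vscale /eps /=; split => /=; ring.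
have K0 := key o0; have K1 := key o1; have K2 := key o2.
have Hb' : b = vadd a (vscale t (tov v)).
  move/v3eq: K0; move/v3eq: K1; move/v3eq: K2.
  rewrite /vcross /vadd /vscale /tov /ve /=.
  move=> [? ? ?] [? ? ?] [? ? ?].
  apply/v3eq; split => /=; lra.
exists (Pv u), t, al, be; split; [|split].
- by rewrite Hz PvZ.
- by rewrite Hz QvZ (Hb _ Pu) Hb'.
- by move: Horth; rewrite spE /Re /= Pv_V.
Qed.

Lemma tov_nz (v : 'I_3 -> R) : (exists k, v k != 0) -> tov v <> vzero R.
Proof.
case=> k Hk /v3eq [/= E0 E1 E2]; move: Hk.
by case: (ord3P k) => [->|[->|->]]; rewrite ?E0 ?E1 ?E2 eqxx.
Qed.

Lemma nz_tov (w : v3 R) : w <> vzero R -> exists k, vget w k != 0.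
Proof.
move=> Hw.
case: (eqVneq w.1.1 0) => H0; last by exists o0.
case: (eqVneq w.1.2 0) => H1; last by exists o1.
case: (eqVneq w.2 0) => H2; last by exists o2.
by exfalso; apply: Hw; apply/v3eq; split.
Qed.

Lemma tov_vget (w : v3 R) : tov (fun k => vget w k) = w.
Proof. by case: w => [[]]. Qed.

Lemma main (z1 z2 z3 : M)
    (Hz1 : ~ in_epsM z1) (Hz2 : ~ in_epsM z2) (Hz3 : ~ in_epsM z3)
    (H12 : D_indep2 z1 z2) (H13 : D_indep2 z1 z3) (H23 : D_indep2 z2 z3) :
  let i_cond := sp (cross sp m z1 z2) z3 = 0 in
  let ii_cond := D_comb z1 z2 z3 \/ D_comb z2 z1 z3 \/ D_comb z3 z1 z2 in
  let iii_cond :=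
    exists (A : M -> Prop) (v : 'I_3 -> R),
      in_E sp A /\ (exists k, v k != 0) /\
      axis_meets_orth sp m z1 A v /\ axis_meets_orth sp m z2 A v /\
      axis_meets_orth sp m z3 A v in
  [/\ i_cond <-> ii_cond, ii_cond <-> iii_cond
    & ii_cond -> D_comb z1 z2 z3 /\ D_comb z2 z1 z3 /\ D_comb z3 z1 z2].
Proof.
move=> i_cond ii_cond iii_cond.
have i_all : tz z1 z2 z3 -> D_comb z1 z2 z3 /\ D_comb z2 z1 z3 /\ D_comb z3 z1 z2.
  move=> H; split; [|split].
  - exact: tz_comb H23 (tz_cyc H).
  - exact: tz_comb H13 (tz_swap (tz_cyc (tz_cyc H))).
  - exact: tz_comb H12 H.
have ii_i : ii_cond -> tz z1 z2 z3.
  case=> [H|[H|H]].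
  - exact: comb_tz H.
  - exact: tz_swap (comb_tz H).
  - exact: tz_cyc (comb_tz H).
have nz : forall z, ~ in_epsM z -> Pv z <> vzero R by move=> z Hz /epsE.
split.
- split; first by move=> H; right; right; case: (i_all H) => _ [].
  exact: ii_i.
- split.
  + move=> Hii; have [_ [_ [al [be Ez3]]]] := i_all (ii_i Hii).
    have [F1 F2] := PQ2 al be z1 z2; rewrite -Ez3 in F1 F2.
    have Hc := indep_cross H12.
    have [a [[t1 E1] [[t2 E2] [t3 E3]]]] :=
      construct (nz _ Hz1) (nz _ Hz2) (nz _ Hz3) Hc F1 F2.
    set w := vcross (Pv z1) (Pv z2) in Hc E1 E2 E3.
    have Ew : tov (fun k => vget w k) = w := tov_vget w.
    exists (Pc a), (fun k => vget w k); split; first exact: Pc_inE.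
    split; first exact: nz_tov.
    split; [|split].
    * apply: (meets_Pc (t := t1)); rewrite ?Ew //; first exact: nz.
      by rewrite /w /vdot /vcross /=; ring.
    * apply: (meets_Pc (t := t2)); rewrite ?Ew //; first exact: nz.
      by rewrite /w /vdot /vcross /=; ring.
    * apply: (meets_Pc (t := t3)); rewrite ?Ew //; first exact: nz.
      by rewrite F1 /w /vdot /vcross /vadd /vscale /=; ring.
  + case=> A [v [HA [Hv [M1 [M2 M3]]]]].
    have [a Ha] := E_struct HA.
    have [r1 [t1 [a1 [b1 [P1 [Q1 R1]]]]]] := meets_struct HA Ha M1.
    have [r2 [t2 [a2 [b2 [P2 [Q2 R2]]]]]] := meets_struct HA Ha M2.
    have [r3 [t3 [a3 [b3 [P3 [Q3 R3]]]]]] := meets_struct HA Ha M3.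
    have [C1 C2] := iii_core a t1 t2 t3 a1 a2 a3 b1 b2 b3 (tov_nz Hv) R1 R2 R3.
    have Hi : tz z1 z2 z3 by apply/tzE; rewrite P1 P2 P3 Q1 Q2 Q3.
    case: (i_all Hi) => H _; by left.
- by move=> H; apply: i_all; apply: ii_i.
Qed.
End Coord.

Unset Implicit Arguments.
Set Strict Implicit.
Theorem proposition15 (R : realType) (M : lmodType (dual R))
    (sp : M -> M -> dual R) (m : 'I_3 -> M)
    (Hsp : scalar_product sp) (Hm : D_basis m) (Hon : orthonormal3 sp m)
    (z1 z2 z3 : M)
    (Hz1 : ~ in_epsM z1) (Hz2 : ~ in_epsM z2) (Hz3 : ~ in_epsM z3)
    (H12 : D_indep2 z1 z2) (H13 : D_indep2 z1 z3) (H23 : D_indep2 z2 z3) :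
  let i_cond := sp (cross sp m z1 z2) z3 = 0 in
  let ii_cond := D_comb z1 z2 z3 \/ D_comb z2 z1 z3 \/ D_comb z3 z1 z2 in
  let iii_cond :=
    exists (A : M -> Prop) (v : 'I_3 -> R),
      in_E sp A /\ (exists k, v k != 0) /\
      axis_meets_orth sp m z1 A v /\ axis_meets_orth sp m z2 A v /\
      axis_meets_orth sp m z3 A v in
  [/\ i_cond <-> ii_cond, ii_cond <-> iii_cond
    & ii_cond -> D_comb z1 z2 z3 /\ D_comb z2 z1 z3 /\ D_comb z3 z1 z2].
Proof.
move=> *; exact: main.
Qed.
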